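(* For every level $j\in\{2,\dots,K\}$ and every $z\in[0,1]$, the marginal generating function of the number of waiting level-$j$ clients under $P$ satisfies $$\sum_{\mathbf n\in\mathbb N_0^K}P(\mathbf n)\,z^{n_j}=\frac{1-\sigma_j}{\eta_+(z)-\sigma_j}=\frac{1-\sigma_j}{r_j}\cdot\frac{\sigma_j-\eta_-(z)}{1-\sigma_j z}=\frac{1-\sigma_j}{1-\sigma_j z}\cdot\frac{1-z\,\eta_-(z)}{1-\eta_-(z)},$$ where $\eta_\pm(z)=\tfrac12\big[1+\sigma_j-r_jz\pm\sqrt{(1+\sigma_j-r_jz)^2-4\sigma_{j-1}}\big]$. That is, the level-$j$ marginal coincides with the low-priority marginal of a two-level problem with high-level intensity $\sigma_{j-1}$ and low-level intensity $r_j$ (levels below $j$ discarded).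
   Context: Fix integers $c\ge 1$, $K\ge 2$ and reals $r_1,\dots,r_K>0$ with $r=\sum_{k=1}^K r_k<1$ (here $r_k=\lambda_k/(c\mu)$ for an M/M/$c$ queue with $K$ non-preemptive priority levels, level 1 the highest). Write $\sigma_k=\sum_{j=1}^k r_j$, $\mathbf e_\kappa$ for the standard unit vectors of $\mathbb Z^K$, $\delta_{ij}$ for the Kronecker delta. Consider the equations for $(p_{\mathbf n})_{\mathbf n\in\mathbb N_0^K}$, with the convention $p_{\mathbf n}=0$ if some component of $\mathbf n$ is negative: $$(1+r)p_{\mathbf n}=\Big(\prod_{j=1}^K\delta_{0n_j}\Big)p_{\mathbf n}+\sum_{\kappa=1}^K\Big[r_\kappa p_{\mathbf n-\mathbf e_\kappa}+\Big(\prod_{j=1}^{\kappa-1}\delta_{0n_j}\Big)p_{\mathbf n+\mathbf e_\kappa}\Big],\quad \mathbf n\in\mathbb N_0^K .$$ These are the stationary balance equations for the states in which all $c$ servers are busy and $n_\kappa$ clients of level $\kappa$ wait in the queue; their nonnegative summable solutions form a one-dimensional cone, and $P$ denotes the unique solution with $\sum_{\mathbf n}P(\mathbf n)=1$. *)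

(* Defs.v *)
From HB Require Import structures.
From mathcomp Require Import all_boot all_order all_algebra.
From mathcomp Require Import all_classical all_reals all_analysis.
Set Implicit Arguments. Unset Strict Implicit. Unset Printing Implicit Defensive.
Import Order.TTheory GRing.Theory Num.Theory.
Local Open Scope ring_scope.

(* Level k (1-based in the paper) is the ordinal index k-1 : 'I_K.
   A state n in N_0^K is a finite function {ffun 'I_K -> nat}. *)

Definition incr {K : nat} (n : {ffun 'I_K -> nat}) (k : 'I_K) : {ffun 'I_K -> nat} :=
  [ffun i => if i == k then (n i).+1 else n i].

(* n - e_k (only used when n k > 0) *)
Definition decr {K : nat} (n : {ffun 'I_K -> nat}) (k : 'I_K) : {ffun 'I_K -> nat} :=
  [ffun i => if i == k then (n i).-1 else n i].

(* p_{n - e_k}, with the convention p = 0 if a component is negative *)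
Definition p_minus {R : numDomainType} {K : nat} (p : {ffun 'I_K -> nat} -> R)
  (n : {ffun 'I_K -> nat}) (k : 'I_K) : R :=
  if n k == 0%N then 0 else p (decr n k).

Definition rtot {R : numDomainType} {K : nat} (r : 'I_K -> R) : R := \sum_(k < K) r k.

(* sigma(m) = r_1 + ... + r_m  (sum of the first m levels) *)
Definition sigma {R : numDomainType} {K : nat} (r : 'I_K -> R) (m : nat) : R :=
  \sum_(k < K | (k < m)%N) r k.

Definition balance_eq {R : numDomainType} {K : nat} (r : 'I_K -> R)
  (p : {ffun 'I_K -> nat} -> R) (n : {ffun 'I_K -> nat}) : Prop :=
  (1 + rtot r) * p n =
    (if [forall j, n j == 0%N] then p n else 0)
    + \sum_(k < K) ( r k * p_minus p n k
                     + (if [forall j : 'I_K, (j < k)%N ==> (n j == 0%N)]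
                        then p (incr n k) else 0) ).

(* eta_{+/-}(z) for level j (1-based), i.e. sigma_j = sigma r j, sigma_{j-1} = sigma r (j-1) *)
Definition eta_plus {R : rcfType} (sj sjm1 rj z : R) : R :=
  (1 + sj - rj * z + Num.sqrt ((1 + sj - rj * z) ^+ 2 - 4 * sjm1)) / 2.
Definition eta_minus {R : rcfType} (sj sjm1 rj z : R) : R :=
  (1 + sj - rj * z - Num.sqrt ((1 + sj - rj * z) ^+ 2 - 4 * sjm1)) / 2.

(* Main.v *)
Require Import Defs.
From HB Require Import structures.
From mathcomp Require Import all_boot all_order all_algebra.
From mathcomp Require Import all_classical all_reals all_analysis.
From mathcomp Require Import lra ring zify.
Import Order.TTheory GRing.Theory Num.Theory.
Local Open Scope ring_scope.
Set Implicit Arguments. Unset Strict Implicit. Unset Printing Implicit Defensive.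

Section Sums.
Variable R : realType.
Variable T : choiceType.

Definition S (f : T -> R) : \bar R := \esum_(n in [set: T]) (f n)%:E.

Lemma S_ge0 f : (forall n, 0 <= f n) -> (0 <= S f)%E.
Proof. by move=> f0; apply: esum_ge0 => n _; rewrite lee_fin. Qed.

Lemma S_ext f g : (forall n, f n = g n) -> S f = S g.
Proof. by move=> e; apply: eq_esum => n _; rewrite e. Qed.

Lemma S_le f g : (forall n, f n <= g n) -> (S f <= S g)%E.
Proof. by move=> e; apply: le_esum => n _; rewrite lee_fin. Qed.

Lemma S_add f g : (forall n, 0 <= f n) -> (forall n, 0 <= g n) ->
  S (fun n => f n + g n) = (S f + S g)%E.
Proof.
move=> f0 g0; rewrite /S -esumD; last 2 first.
- by move=> n _; rewrite lee_fin.
- by move=> n _; rewrite lee_fin.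
by apply: eq_esum => n _; rewrite EFinD.
Qed.

Lemma S_scale c f : 0 <= c -> (forall n, 0 <= f n) ->
  S (fun n => c * f n) = (c%:E * S f)%E.
Proof.
move=> c0 f0; rewrite /S /esum -ereal_supZl//; last first.
  apply/set0P; exists 0%E; exists set0; first exact: fsets_set0.
  by rewrite fsbig_set0.
rewrite image_comp; congr ereal_sup; apply: eq_imagel => A _ /=.
rewrite ge0_mule_fsumr; last by move=> i; rewrite lee_fin.
by apply: eq_fsbigr => i _; rewrite EFinM.
Qed.

Lemma S_sum (I : choiceType) (s : seq I) (P : pred I) (f : I -> T -> R) :
  (forall i n, 0 <= f i n) ->
  S (fun n => \sum_(i <- s | P i) f i n) = (\sum_(i <- s | P i) S (f i))%E.
Proof.
move=> f0; rewrite /S.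
have := @esum_sum R T I [set: T] s P (fun n i => (f i n)%:E).
move=> <-; last by move=> n i _ _; rewrite lee_fin.
by apply: eq_esum => n _; rewrite sumEFin.
Qed.

End Sums.

Section Part.
Variable R : realType.
Variable T : choiceType.

Lemma S_part (g : T -> nat) (f : T -> R) : (forall n, 0 <= f n) ->
  S f = (\sum_(b <oo) S (fun n => if g n == b then f n else 0%R))%E.
Proof.
move=> f0.
have -> : S f = \esum_(n in \bigcup_(b in [set: nat]) [set n : T | g n = b]%classic) (f n)%:E.
  rewrite /S; congr esum; apply/seteqP; split => n //= _.
  by exists (g n).
rewrite esum_bigcupT; last 2 first.
- move=> i j _ _ [n [/= -> ->]] //.
- by move=> n; rewrite lee_fin.
rewrite nneseries_esumT; last by move=> b; apply: S_ge0 => n; case: ifP.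
apply: eq_esum => b _; rewrite esum_mkcond /S; apply: eq_esum => n _.
rewrite /in_mem /= /mem /= /in_set /=.
by case: (boolP (g n == b)) => [/eqP|/eqP] H; rewrite ?(asboolT H) ?(asboolF H).
Qed.

Lemma S_fin (f g : T -> R) x : (forall n, 0 <= f n <= g n) -> S g = x%:E ->
  S f = (fine (S f))%:E.
Proof.
move=> fg Sg; have f0 : (0 <= S f)%E by apply: S_ge0 => n; case/andP: (fg n).
rewrite fineK // ge0_fin_numE //.
apply: (@le_lt_trans _ _ (S g)); last by rewrite Sg ltry.
by apply: S_le => n; case/andP: (fg n).
Qed.

End Part.

Section Reidx.
Variable R : realType.
Variable K : nat.
Local Notation st := {ffun 'I_K -> nat}.

Lemma incrE (n : st) k i : incr n k i = if i == k then (n i).+1 else n i.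
Proof. by rewrite ffunE. Qed.
Lemma decrE (n : st) k i : decr n k i = if i == k then (n i).-1 else n i.
Proof. by rewrite ffunE. Qed.

Lemma decr_incr (n : st) k : decr (incr n k) k = n.
Proof. by apply/ffunP => i; rewrite decrE incrE; case: (i == k). Qed.

Lemma incr_decr (n : st) k : n k != 0%N -> incr (decr n k) k = n.
Proof.
move=> nk; apply/ffunP => i; rewrite incrE decrE; case: (eqVneq i k) => // ->.
by rewrite prednK // lt0n.
Qed.

Lemma S_reindex (k : 'I_K) (g : st -> R) :
  S (fun n : st => if n k == 0%N then 0 else g n) = S (fun m : st => g (incr m k)).
Proof.
rewrite /S.
have -> : \esum_(n in [set: st]) (if n k == 0%N then 0 else g n)%:E =
          \esum_(n in [set n : st | n k != 0%N]%classic) (g n)%:E.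
  rewrite [RHS]esum_mkcond; apply: eq_esum => n _.
  rewrite /in_mem /= /mem /= /in_set /=.
  case: (boolP (n k == 0%N)) => H.
    by rewrite asboolF //= => /negP; rewrite H.
  by rewrite asboolT.
apply: (reindex_esum [set: st] _ (fun m : st => incr m k)); split.
- by move=> m _ /=; rewrite incrE eqxx.
- move=> m m' _ _ /(congr1 (fun x => decr x k)); by rewrite !decr_incr.
- move=> n /= nk; exists (decr n k) => //; exact: incr_decr.
Qed.

Definition before (n : st) (k : 'I_K) : bool := [forall j : 'I_K, (j < k)%N ==> (n j == 0%N)].

Lemma before_incr n k : before (incr n k) k = before n k.
Proof.
rewrite /before; apply: eq_forallb => j; rewrite incrE. by case: (eqVneq j k) => [->|_]; rewrite ?ltnn.
Qed.

Lemma S_reindex_dep (k : 'I_K) (g : st -> R) :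
  S (fun n : st => if before n k then g (incr n k) else 0) =
  S (fun m : st => if (m k != 0%N) && before m k then g m else 0).
Proof.
have := S_reindex k (fun m : st => if before m k then g m else 0).
move=> E; transitivity (S (fun m : st => if m k == 0%N then 0 else if before m k then g m else 0)).
  rewrite E; apply: S_ext => n; by rewrite before_incr.
by apply: S_ext => n; case: (n k == 0%N).
Qed.

End Reidx.

Section Bal.
Variable R : realType.
Variable K : nat.
Local Notation st := {ffun 'I_K -> nat}.
Variable r : 'I_K -> R.
Variable p : st -> R.
Hypothesis hr : forall k, 0 < r k.
Hypothesis hp0 : forall n, 0 <= p n.
Hypothesis hbal : forall n, balance_eq r p n.
Hypothesis hnorm : (\esum_(n in [set: st]) (p n)%:E = 1)%E.

Definition sR (f : st -> R) : R := fine (S f).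

Lemma fin_p (f : st -> R) C : 0 <= C -> (forall n, 0 <= f n <= C * p n) ->
  S f = (sR f)%:E.
Proof.
move=> C0 fC; apply: (@S_fin _ _ f (fun n => C * p n) C) => //.
by rewrite S_scale // /S hnorm mule1.
Qed.

Lemma rtot_ge0 : 0 <= rtot r.
Proof. by rewrite /rtot sumr_ge0 // => k _; exact: ltW. Qed.

Lemma p_minus_ge0 n k : 0 <= p_minus p n k.
Proof. by rewrite /p_minus; case: ifP. Qed.

Lemma bal_S (w : st -> R) : (forall n, 0 <= w n) ->
  ((1 + rtot r)%:E * S (fun n : st => p n * w n)%R =
   S (fun n : st => if [forall j, n j == 0%N] then p n * w n else 0)%R
   + \sum_(k < K) ((r k)%:E * S (fun m : st => p m * w (incr m k))%R)
   + S (fun m : st => \sum_(k < K) (if (m k != 0%N) && before m k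
                                  then p m * w (decr m k) else 0))%R)%E.
Proof.
move=> w0.
have r0 k : 0 <= r k by exact: ltW.
rewrite -S_scale; last 2 first.
- by rewrite addr_ge0 // rtot_ge0.
- by move=> n; rewrite mulr_ge0.
transitivity (S (fun n : st => (if [forall j, n j == 0%N] then p n * w n else 0) +
   \sum_(k < K) (r k * (p_minus p n k * w n) +
       (if before n k then p (incr n k) * w n else 0)))).
  apply: S_ext => n; rewrite mulrA (hbal n) mulrDl big_distrl /=.
  congr (_ + _); first by case: ifP; rewrite ?mul0r.
  apply: eq_bigr => k _; rewrite mulrDl mulrA; congr (_ + _).
  by rewrite /before; case: ifP; rewrite ?mul0r.
rewrite S_add; last 2 first.
- by move=> n; case: ifP => //; rewrite mulr_ge0.
- move=> n; apply: sumr_ge0 => k _; apply: addr_ge0.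
    by rewrite !mulr_ge0 // p_minus_ge0.
  by case: ifP => //; rewrite mulr_ge0.
rewrite -addeA; congr (_ + _)%E.
rewrite S_sum; last first.
  move=> k n; apply: addr_ge0; first by rewrite !mulr_ge0 // p_minus_ge0.
  by case: ifP => //; rewrite mulr_ge0.
rewrite S_sum; last first.
  by move=> k n; case: ifP => //; rewrite mulr_ge0.
rewrite -big_split /=; apply: eq_bigr => k _.
rewrite S_add; last 2 first.
- by move=> n; rewrite !mulr_ge0 // p_minus_ge0.
- by move=> n; case: ifP => //; rewrite mulr_ge0.
congr (_ + _)%E.
  rewrite S_scale //; last by move=> n; rewrite mulr_ge0 // p_minus_ge0.
  congr (_ * _)%E.
  transitivity (S (fun n : st => if n k == 0%N then 0 else p (decr n k) * w (incr (decr n k) k))).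
    apply: S_ext => n; rewrite /p_minus; case: (boolP (n k == 0%N)) => H; first by rewrite mul0r.
    by rewrite incr_decr.
  by rewrite S_reindex; apply: S_ext => m; rewrite decr_incr.
transitivity (S (fun n : st => if before n k then p (incr n k) * w (decr (incr n k) k) else 0)).
  by apply: S_ext => n; rewrite decr_incr.
by rewrite (S_reindex_dep k (fun m : st => p m * w (decr m k))).
Qed.

End Bal.

Section Comb.
Variable K : nat.
Local Notation st := {ffun 'I_K -> nat}.
Variable j : 'I_K.

Definition Hn (n : st) : nat := (\sum_(i < K | (i < j)%N) n i)%N.

Lemma Hn_incr (n : st) k : Hn (incr n k) = (Hn n + (k < j))%N.
Proof.
rewrite /Hn.
rewrite (eq_bigr (fun i => n i + (i == k))%N); last first.
  by move=> i _; rewrite incrE; case: eqP => _; rewrite ?addn1 ?addn0.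
rewrite big_split /=; congr (_ + _)%N.
case: (ltnP k j) => kj.
  rewrite (bigD1 k) //= eqxx big1 // => i /andP[_ /negPf ->] //.
by rewrite big1 // => i ij; case: eqVneq => // e; move: ij; rewrite e ltnNge kj.
Qed.

Lemma Hn_decr (n : st) k : n k != 0%N -> Hn n = (Hn (decr n k) + (k < j))%N.
Proof. by move=> nk; rewrite -Hn_incr incr_decr. Qed.

Lemma before_Hn (n : st) k : before n k -> (j <= k)%N -> Hn n = 0%N.
Proof.
move=> /forallP b jk; rewrite /Hn big1 // => i ij.
by have /implyP/(_ (leq_trans ij jk))/eqP := b i.
Qed.

Lemma first_nz (n : st) : n != [ffun => 0%N] ->
  exists k, [/\ n k != 0%N, before n k & forall k', (n k' != 0%N) && before n k' -> k' = k].
Proof.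
move=> nn.
have [i0 ni0] : exists i, n i != 0%N.
  apply/existsP; apply: contraNT nn => /existsPn H; apply/eqP/ffunP => i.
  by rewrite ffunE; apply/eqP; move: (H i); rewrite negbK.
case: (@arg_minnP _ i0 (fun i => n i != 0%N) (fun i : 'I_K => nat_of_ord i) ni0) => k nk kmin.
have bk : before n k.
  apply/forallP => i; apply/implyP => ik; apply: contraTT ik => ni.
  by rewrite -leqNgt kmin.
exists k; split => // k' /andP[nk' bk']; apply/val_inj/eqP.
rewrite eqn_leq (kmin _ nk') andbT leqNgt; apply/negP => kk.
by move: bk' => /forallP/(_ k)/implyP/(_ kk); rewrite (negPf nk).
Qed.

Lemma sum_first (R : nzRingType) (n : st) (g : 'I_K -> R) k :
  n k != 0%N -> before n k ->
  (forall k', (n k' != 0%N) && before n k' -> k' = k) ->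
  \sum_(k' < K) (if (n k' != 0%N) && before n k' then g k' else 0) = g k.
Proof.
move=> nk bk u; rewrite (bigD1 k) //= nk bk /= big1 ?addr0 // => i ik.
case: ifP => // /u e; by move: ik; rewrite e eqxx.
Qed.

Lemma sum_zero (R : nzRingType) (n : st) (g : 'I_K -> R) :
  n == [ffun => 0%N] ->
  \sum_(k' < K) (if (n k' != 0%N) && before n k' then g k' else 0) = 0.
Proof.
move=> /eqP ->; rewrite big1 // => i _; by rewrite ffunE eqxx.
Qed.

End Comb.

Section Main.
Variable R : realType.
Variable K : nat.
Local Notation st := {ffun 'I_K -> nat}.
Variable r : 'I_K -> R.
Variable p : st -> R.
Hypothesis hr : forall k, 0 < r k.
Hypothesis hp0 : forall n, 0 <= p n.
Hypothesis hbal : forall n, balance_eq r p n.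
Hypothesis hnorm : (\esum_(n in [set: st]) (p n)%:E = 1)%E.

Definition bnd (f : st -> R) := forall n, 0 <= f n <= p n.

Lemma sR_ext (f g : st -> R) : (forall n, f n = g n) -> sR f = sR g.
Proof. by move=> e; rewrite /sR (S_ext e). Qed.

Lemma finb f : bnd f -> S f = (sR f)%:E.
Proof. by move=> b; apply: (@fin_p _ _ p hp0 hnorm f 1) => // n; rewrite mul1r. Qed.

Lemma sR_ge0 f : bnd f -> 0 <= sR f.
Proof. by move=> b; rewrite -lee_fin -finb //; apply: S_ge0 => n; case/andP: (b n). Qed.

Lemma sR_add f g : bnd f -> bnd g -> sR (fun n => f n + g n) = sR f + sR g.
Proof.
move=> bf bg; apply: EFin_inj; rewrite EFinD -(finb bf) -(finb bg).
rewrite -(@fin_p _ _ p hp0 hnorm _ 2) //.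
  by apply: S_add => n; [case/andP: (bf n)|case/andP: (bg n)].
move=> n; case/andP: (bf n) => ? ?; case/andP: (bg n) => ? ?.
by rewrite addr_ge0 //= mulr2n mulrDl mul1r lerD.
Qed.

Lemma sR_scale c f : 0 <= c -> bnd f -> sR (fun n => c * f n) = c * sR f.
Proof.
move=> c0 bf; apply: EFin_inj; rewrite EFinM -(finb bf).
rewrite -(@fin_p _ _ p hp0 hnorm _ c) //.
  by apply: S_scale => // n; case/andP: (bf n).
move=> n; case/andP: (bf n) => ? ?.
by rewrite mulr_ge0 //= ler_wpM2l.
Qed.

Lemma sR0 : sR (fun _ : st => 0 : R) = 0.
Proof. by rewrite /sR /S esum1. Qed.

Lemma sR_le f g : bnd f -> bnd g -> (forall n, f n <= g n) -> sR f <= sR g.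
Proof. by move=> bf bg fg; rewrite -lee_fin -(finb bf) -(finb bg); apply: S_le. Qed.

Lemma bal_R (w : st -> R) : (forall n, 0 <= w n <= 1) ->
  (1 + rtot r) * sR (fun n : st => p n * w n) =
   sR (fun n : st => if [forall j, n j == 0%N] then p n * w n else 0)
   + \sum_(k < K) (r k * sR (fun m : st => p m * w (incr m k)))
   + sR (fun m : st => \sum_(k < K) (if (m k != 0%N) && before m k
                                  then p m * w (decr m k) else 0)).
Proof.
move=> w01.
have w0 n : 0 <= w n by case/andP: (w01 n).
have pw n x : 0 <= p n * w x <= p n.
  by case/andP: (w01 x) => a b; rewrite mulr_ge0 //= ler_piMr.
apply: EFin_inj; rewrite !EFinD EFinM -sumEFin.
under eq_bigr do rewrite EFinM.
have b1 : bnd (fun n => p n * w n) by move=> n; exact: pw.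
have b2 : bnd (fun n : st => if [forall j, n j == 0%N] then p n * w n else 0).
  by move=> n; case: ifP => _; [exact: pw | rewrite lexx hp0].
rewrite -(finb b1) -(finb b2).
rewrite (eq_bigr (fun k => (r k)%:E * S (fun m : st => p m * w (incr m k))%R)%E); last first.
  by move=> k _; rewrite -finb // => m; exact: pw.
rewrite -(@fin_p _ _ p hp0 hnorm _ K%:R) //.
  exact: (@bal_S _ _ r p hr hp0 hbal).
move=> n; apply/andP; split.
  by apply: sumr_ge0 => k _; case: ifP => // _; case/andP: (pw n (decr n k)).
apply: (@le_trans _ _ (\sum_(k < K) p n)).
  by apply: ler_sum => k _; case: ifP => // _; case/andP: (pw n (decr n k)).
by rewrite sumr_const card_ord mulr_natl.
Qed.

End Main.

Section Steps.
Variable R : realType.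
Variable K : nat.
Local Notation st := {ffun 'I_K -> nat}.
Variable r : 'I_K -> R.
Variable p : st -> R.
Hypothesis hr : forall k, 0 < r k.
Hypothesis hp0 : forall n, 0 <= p n.
Hypothesis hbal : forall n, balance_eq r p n.
Hypothesis hnorm : (\esum_(n in [set: st]) (p n)%:E = 1)%E.
Variable j : 'I_K.
Variable z : R.
Hypothesis hz0 : 0 <= z.
Hypothesis hz1 : z <= 1.

Definition W (n : st) : R := z ^+ (n j).
Definition Fa (a : nat) := sR (fun n : st => if Hn j n == a then p n * W n else 0).

Lemma W01 n : 0 <= W n <= 1.
Proof. by rewrite /W exprn_ge0 //= exprn_ile1. Qed.

Lemma sig_split : sigma r j.+1 = sigma r j + r j.
Proof.
rewrite /sigma (bigD1 j) //= addrC; congr (_ + _).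
by apply: eq_bigl => k; rewrite ltnS ltn_neqAle andbC.
Qed.

Lemma arr_split (A B C : R) :
  \sum_(k < K) r k * (if (k < j)%N then A else if k == j then B else C) =
  sigma r j * A + r j * B + (rtot r - sigma r j.+1) * C.
Proof.
have E1 : rtot r - sigma r j.+1 = \sum_(k < K | ~~ (k < j.+1)%N) r k.
  by rewrite /rtot (bigID (fun k : 'I_K => (k < j.+1)%N)) /= -/(sigma r j.+1) addrAC subrr add0r.
rewrite E1 (bigID (fun k : 'I_K => (k < j.+1)%N)) /= (bigD1 j) //= ltnn eqxx.
have P1 : \sum_(i < K | (i < j.+1)%N && (i != j))
    r i * (if (i < j)%N then A else if i == j then B else C) = \sum_(i < K | (i < j)%N) r i * A.
  apply: eq_big.
    by move=> k; rewrite ltnS ltn_neqAle andbC.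
  by move=> k /andP[k1 kj]; rewrite ltnS in k1; rewrite ltn_neqAle kj k1.
have P2 : \sum_(i < K | ~~ (i < j.+1)%N)
    r i * (if (i < j)%N then A else if i == j then B else C) = \sum_(i < K | ~~ (i < j.+1)%N) r i * C.
  apply: eq_bigr => k kj; rewrite ltnS -ltnNge in kj.
  have kj2 : k != j by apply/eqP => e; move: kj; rewrite e ltnn.
  by rewrite ltnNge (ltnW kj) /= (negPf kj2).
rewrite P1 P2 -!big_distrl /= -/(sigma r j).
lra.
Qed.

Lemma W_incr (m : st) k : W (incr m k) = (if k == j then z else 1) * W m.
Proof.
by rewrite /W incrE; case: (eqVneq j k) => [e|jk]; rewrite ?exprS ?mul1r.
Qed.

Lemma W_decr (m : st) k : m k != 0%N -> W m = (if k == j then z else 1) * W (decr m k).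
Proof. by move=> mk; rewrite -W_incr incr_decr. Qed.

Lemma bnd_ifW (P : st -> bool) : bnd p (fun n => if P n then p n * W n else 0).
Proof.
move=> n; case: ifP => _; last by rewrite lexx hp0.
by case/andP: (W01 n) => a b; rewrite mulr_ge0 //= ler_piMr.
Qed.

Lemma bnd_if (P : st -> bool) : bnd p (fun n => if P n then p n else 0).
Proof. by move=> n; case: ifP => _; rewrite ?lexx hp0. Qed.

Lemma Hn_zero : Hn j [ffun => 0%N] = 0%N.
Proof. by rewrite /Hn big1 // => i _; rewrite ffunE. Qed.

Lemma stepA a : (1 + sigma r j.+1) * Fa a.+1 = sigma r j * Fa a + r j * z * Fa a.+1 + Fa a.+2.
Proof.
pose w (n : st) := if Hn j n == a.+1 then W n else 0.
have w01 n : 0 <= w n <= 1 by rewrite /w; case: ifP => _; [exact: W01| rewrite lexx ler01].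
have E := bal_R hr hp0 hbal hnorm w01.
have L1 : sR (fun n : st => p n * w n) = Fa a.+1.
  by apply: sR_ext => n; rewrite /w; case: ifP; rewrite ?mulr0.
have L2 : sR (fun n : st => if [forall j, n j == 0%N] then p n * w n else 0) = 0.
  transitivity (sR (fun _ : st => 0 : R)); last exact: sR0.
  apply: sR_ext => n; case: ifP => // H.
  have -> : n = [ffun => 0%N] by apply/ffunP => i; rewrite ffunE; apply/eqP; move/forallP: H; apply.
  by rewrite /w Hn_zero mulr0.
have L3 k : sR (fun m : st => p m * w (incr m k)) =
    (if (k < j)%N then Fa a else if k == j then z * Fa a.+1 else Fa a.+1).
  rewrite /w; case: (ltnP k j) => kj.
    have kj2 : k != j by apply/eqP => e; move: kj; rewrite e ltnn.
    apply: sR_ext => m; rewrite Hn_incr kj addn1 eqSS W_incr (negPf kj2) mul1r.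
    by case: ifP; rewrite ?mulr0.
  case: eqVneq => [e|kj2].
    rewrite -(sR_scale hp0 hnorm) //; last exact: bnd_ifW.
    apply: sR_ext => m; rewrite Hn_incr ltnNge kj addn0 W_incr e eqxx.
    by case: ifP; rewrite ?mulr0 // mulrCA.
  apply: sR_ext => m; rewrite Hn_incr ltnNge kj addn0 W_incr (negPf kj2) mul1r.
  by case: ifP; rewrite ?mulr0.
have L4 : sR (fun m : st => \sum_(k < K) (if (m k != 0%N) && before m k
                                  then p m * w (decr m k) else 0)) = Fa a.+2.
  apply: sR_ext => m; case: (eqVneq m [ffun => 0%N]) => [e|ne].
    by rewrite sum_zero ?e ?Hn_zero // eqxx.
  have [k [mk bk u]] := first_nz ne.
  rewrite (sum_first (fun k => p m * w (decr m k)) mk bk u) /w.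
  rewrite (Hn_decr j mk) (W_decr mk).
  case: (ltnP k j) => kj.
    have kj2 : k != j by apply/eqP => e; move: kj; rewrite e ltnn.
    by rewrite (negPf kj2) mul1r addn1 eqSS; case: ifP; rewrite ?mulr0.
  have H0 := before_Hn bk kj; rewrite (Hn_decr j mk) ltnNge kj /= addn0 in H0.
  by rewrite H0 /= mulr0.
rewrite L1 L2 (eq_bigr _ (fun k _ => congr1 (fun x => r k * x) (L3 k))) arr_split L4 in E.
lra.
Qed.

Definition Qb (b : nat) := sR (fun n : st => if n j == b then p n else 0).
Definition qb (b : nat) := sR (fun n : st => if (Hn j n == 0%N) && (n j == b) then p n else 0).

Lemma Hn_before (m : st) : Hn j m = 0%N -> before m j.
Proof.
move=> H; apply/forallP => i; apply/implyP => ij.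
move: H; rewrite /Hn (bigD1 i) //=.
by move/eqP; rewrite addn_eq0 => /andP[].
Qed.

Lemma stepB b : r j * Qb b = qb b.+1.
Proof.
pose w (n : st) : R := if (n j <= b)%N then 1 else 0.
have w01 n : 0 <= w n <= 1 by rewrite /w; case: ifP => _; rewrite ?lexx ?ler01.
have E := bal_R hr hp0 hbal hnorm w01.
set A := sR (fun n : st => if (n j <= b)%N then p n else 0).
set A' := sR (fun n : st => if ((n j).+1 <= b)%N then p n else 0).
set Z := sR (fun n : st => if n == [ffun => 0%N] then p n else 0).
set N := sR (fun n : st => if (n != [ffun => 0%N]) && (n j <= b)%N then p n else 0).
have L1 : sR (fun n : st => p n * w n) = A.
  by apply: sR_ext => n; rewrite /w; case: ifP; rewrite ?mulr0 ?mulr1.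
have L2 : sR (fun n : st => if [forall j, n j == 0%N] then p n * w n else 0) = Z.
  apply: sR_ext => n; case: (eqVneq n [ffun => 0%N]) => [->|ne].
    case: ifP => [_|/negP H]; first by rewrite /w ffunE leq0n mulr1.
    by case: H; apply/forallP => i; rewrite ffunE.
  case: ifP => // H; case/eqP: ne; apply/ffunP => i; rewrite ffunE; apply/eqP.
  by move/forallP: H; apply.
have L3 k : sR (fun m : st => p m * w (incr m k)) =
    (if (k < j)%N then A else if k == j then A' else A).
  have ew m : w (incr m k) = if k == j then (if ((m j).+1 <= b)%N then 1 else 0) else w m.
    by rewrite /w incrE; case: (eqVneq k j).
  case: (ltnP k j) => kj.
    have kj2 : k != j by apply/eqP => e; move: kj; rewrite e ltnn.
    by apply: sR_ext => m; rewrite ew (negPf kj2) /w; case: ifP; rewrite ?mulr0 ?mulr1.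
  case: eqVneq => [e|kj2].
    by apply: sR_ext => m; rewrite ew e eqxx; case: ifP; rewrite ?mulr0 ?mulr1.
  by apply: sR_ext => m; rewrite ew (negPf kj2) /w; case: ifP; rewrite ?mulr0 ?mulr1.
have L4 : sR (fun m : st => \sum_(k < K) (if (m k != 0%N) && before m k
                                  then p m * w (decr m k) else 0)) = N + qb b.+1.
  rewrite -(sR_add hp0 hnorm); try exact: bnd_if.
  apply: sR_ext => m; case: (eqVneq m [ffun => 0%N]) => [e|ne].
    by rewrite sum_zero ?e ?Hn_zero ?ffunE //= addr0.
  have [k [mk bk u]] := first_nz ne.
  rewrite (sum_first (fun k => p m * w (decr m k)) mk bk u) /w decrE /=.
  case: (eqVneq k j) => [e|kj].
    have Hm : Hn j m = 0%N by apply: (before_Hn bk); rewrite e.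
    rewrite Hm /=.
    have mk1 : (0 < m j)%N by rewrite -e lt0n.
    case: (ltngtP (m j) b.+1) => h1.
    - have a1 : (m j <= b)%N by lia.
      have a2 : ((m j).-1 <= b)%N by lia.
      rewrite a1 a2 mulr1; case: (@eqP nat (m j) b.+1) => ?; [lia | by rewrite addr0].
    - have a1 : (m j <= b)%N = false by apply/negbTE; rewrite -ltnNge; lia.
      have a2 : ((m j).-1 <= b)%N = false by apply/negbTE; rewrite -ltnNge; lia.
      rewrite a1 a2 mulr0; case: (@eqP nat (m j) b.+1) => ?; [lia | by rewrite addr0].
    - have a1 : (m j <= b)%N = false by apply/negbTE; rewrite -ltnNge; lia.
      have a2 : ((m j).-1 <= b)%N by lia.
      rewrite a1 a2 mulr1; case: (@eqP nat (m j) b.+1) => ?; [by rewrite add0r | lia].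
  idtac.
  have -> : (Hn j m == 0%N) && (m j == b.+1) = false.
    apply/negP => /andP[/eqP H1 /eqP H2].
    have := u j; rewrite H2 /= Hn_before // => /(_ isT) e; by move: kj; rewrite e eqxx.
  by case: ifP; rewrite ?mulr0 ?mulr1 addr0.
have L5 : A = Z + N.
  rewrite -(sR_add hp0 hnorm); try exact: bnd_if.
  apply: sR_ext => n; case: (eqVneq n [ffun => 0%N]) => [->|ne] /=.
    by rewrite ffunE leq0n addr0.
  by rewrite add0r.
have L6 : A = A' + Qb b.
  rewrite -(sR_add hp0 hnorm); try exact: bnd_if.
  apply: sR_ext => n; case: (ltngtP (n j) b) => h1.
  all: rewrite ?addr0 ?add0r //.
rewrite L1 L2 (eq_bigr _ (fun k _ => congr1 (fun x => r k * x) (L3 k))) arr_split L4 in E.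
rewrite L6 in E L5.
rewrite sig_split in E.
lra.
Qed.

End Steps.

Lemma eta_core (R : realType) (h s D : R) : 0 <= h -> 1 + h <= s -> 0 <= D ->
  D ^+ 2 = s ^+ 2 - 4 * h ->
  [/\ (s + D) / 2 + (s - D) / 2 = s, (s + D) / 2 * ((s - D) / 2) = h,
      1 <= (s + D) / 2, 0 <= (s - D) / 2 & (s - D) / 2 <= h].
Proof.
move=> h0 hs D0 DE.
have P : (s + D) / 2 * ((s - D) / 2) = h.
  have -> : (s + D) / 2 * ((s - D) / 2) = (s ^+ 2 - D ^+ 2) / 4 by field.
  by rewrite DE; field.
have E1 : 1 <= (s + D) / 2.
  rewrite expr2 in DE; nra.
have E2 : 0 <= (s - D) / 2.
  rewrite expr2 in DE; nra.
split; [field | exact: P | exact: E1 | exact: E2 | nra]; done.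
Qed.

Lemma disc_ge0 (R : realType) (h l z : R) : 0 <= h -> 0 < l -> z <= 1 ->
  1 + h <= 1 + (h + l) - l * z /\ 0 <= (1 + (h + l) - l * z) ^+ 2 - 4 * h.
Proof.
move=> h0 l0 z1.
have H : 0 <= l * (1 - z) by apply: mulr_ge0; [exact: ltW | rewrite subr_ge0].
have s1 : 1 + h <= 1 + (h + l) - l * z by rewrite mulrBr mulr1 in H; lra.
split => //.
move: s1; move: (1 + (h + l) - l * z) => s s1.
have H2 : 0 <= (s - (1 + h)) * (s + (1 + h)) by apply: mulr_ge0; lra.
have H3 : 0 <= (1 - h) * (1 - h) by rewrite -expr2 sqr_ge0.
rewrite expr2; nra.
Qed.

Lemma eta_facts (R : realType) (h l z : R) : 0 <= h -> 0 < l -> z <= 1 ->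
  let ep := eta_plus (h + l) h l z in let em := eta_minus (h + l) h l z in
  [/\ ep + em = 1 + (h + l) - l * z, ep * em = h,
      1 <= ep, 0 <= em & em <= h].
Proof.
move=> h0 l0 z1 /=; have [s1 d0] := disc_ge0 h0 l0 z1.
rewrite /eta_plus /eta_minus.
move: s1 d0; move: (1 + (h + l) - l * z) => s s1 d0.
by apply: eta_core => //; rewrite ?sqrtr_ge0 ?sqr_sqrtr.
Qed.

Lemma em_at1 (R : realType) (h l : R) : 0 <= h -> h < 1 -> eta_minus (h + l) h l 1 = h.
Proof.
move=> h0 h1; rewrite /eta_minus.
have -> : (1 + (h + l) - l * 1) ^+ 2 - 4 * h = (1 - h) ^+ 2 by ring.
rewrite sqrtr_sqr ger0_norm; last by lra.
by field.
Qed.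

Section Series.
Variable R : realType.
Variable K : nat.
Local Notation st := {ffun 'I_K -> nat}.
Variable r : 'I_K -> R.
Variable p : st -> R.
Hypothesis hr : forall k, 0 < r k.
Hypothesis hp0 : forall n, 0 <= p n.
Hypothesis hbal : forall n, balance_eq r p n.
Hypothesis hnorm : (\esum_(n in [set: st]) (p n)%:E = 1)%E.
Variable j : 'I_K.
Variable z : R.
Hypothesis hz0 : 0 <= z.
Hypothesis hz1 : z <= 1.

Let F a := Fa p j z a.

Lemma bpW : bnd p (fun n => p n * W j z n).
Proof.
move=> n; have := bnd_ifW hp0 j hz0 hz1 (fun _ => true) n; by [].
Qed.

Lemma F_ge0 a : 0 <= F a.
Proof. exact: (sR_ge0 hp0 hnorm (bnd_ifW hp0 j hz0 hz1 _)). Qed.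

Lemma sRp : sR p = 1.
Proof. by rewrite /sR /S hnorm. Qed.

Lemma G_le1 : sR (fun n => p n * W j z n) <= 1.
Proof.
rewrite -sRp; apply: (sR_le hp0 hnorm bpW) => //.
  by move=> n; rewrite lexx hp0.
by move=> n; case/andP: (bpW n).
Qed.

Lemma G_ser : (sR (fun n => p n * W j z n))%:E = (\sum_(a <oo) (F a)%:E)%E.
Proof.
rewrite -(finb hp0 hnorm bpW) (S_part (Hn j)); last by move=> n; case/andP: (bpW n).
apply/congr_lim/funext => N; apply: eq_bigr => a _.
exact: (finb hp0 hnorm (bnd_ifW hp0 j hz0 hz1 _)).
Qed.

Lemma F_partial N : \sum_(0 <= a < N) F a <= sR (fun n => p n * W j z n).
Proof.
rewrite -lee_fin G_ser -sumEFin.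
apply: (@nneseries_lim_ge _ (fun a => (F a)%:E) xpredT 0%N N) => a _ _.
by rewrite lee_fin F_ge0.
Qed.

Hypothesis hrt : rtot r < 1.

Lemma sig_le_rtot m : sigma r m <= rtot r.
Proof.
rewrite /rtot /sigma [X in _ <= X](bigID (fun k : 'I_K => (k < m)%N)) /= lerDl.
by apply: sumr_ge0 => k _; exact: ltW.
Qed.

Lemma sig_ge0 m : 0 <= sigma r m.
Proof. by rewrite /sigma; apply: sumr_ge0 => k _; exact: ltW. Qed.

Lemma F_geom a : F a = F 0 * (eta_minus (sigma r j + r j) (sigma r j) (r j) z) ^+ a.
Proof.
have hl1 : sigma r j + r j < 1 by rewrite -sig_split; apply: le_lt_trans (sig_le_rtot _) hrt.
have h0 := sig_ge0 j; have l0 := hr j.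
have SA a := stepA hr hp0 hbal hnorm j hz0 hz1 a.
rewrite sig_split in SA.
have [Esum Eprod ep1 em0 emh] := eta_facts h0 l0 hz1.
move: (eta_plus _ _ _ z) (eta_minus _ _ _ z) Esum Eprod ep1 em0 emh => ep em Esum Eprod ep1 em0 emh.
move: (sigma r j) (r j) h0 l0 hl1 SA Esum Eprod emh => h l h0 l0 hl1 SA Esum Eprod emh.
have rec b : F b.+2 = (ep + em) * F b.+1 - ep * em * F b.
  rewrite Esum Eprod; have := SA b; rewrite -/(F _) -/(F _) -/(F _); lra.
have drec b : F b.+2 - em * F b.+1 = ep * (F b.+1 - em * F b) by rewrite rec; ring.
have dpow b : F b.+1 - em * F b = ep ^+ b * (F 1 - em * F 0).
  elim: b => [|b IH]; first by rewrite expr0 mul1r.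
  by rewrite drec IH exprS mulrA.
have em1 : em <= 1 by lra.
have dbound b : `|F b.+1 - em * F b| <= F b.+1 + F b.
  have := F_ge0 b; have := F_ge0 b.+1; move=> f1 f0.
  have e1 : 0 <= em * F b by apply: mulr_ge0.
  have e2 : em * F b <= F b by rewrite ler_piMl.
  rewrite ler_norml; apply/andP; split; lra.
have d0 : F 1 - em * F 0 = 0.
  apply/eqP; rewrite -normr_eq0; apply/negPn/negP => ne.
  have cpos : 0 < `|F 1 - em * F 0| by rewrite lt_def ne normr_ge0.
  have ep0 : 0 <= ep by lra.
  have dn b : `|F b.+1 - em * F b| = ep ^+ b * `|F 1 - em * F 0|.
    by rewrite dpow normrM ger0_norm // exprn_ge0.
  move: (`|F 1 - em * F 0|) cpos dn => c cpos dn.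
  have key N : N%:R * c <= 2.
    have L0 : \sum_(0 <= b < N) c = N%:R * c by rewrite sumr_const_nat subn0 mulr_natl.
    have L1 : \sum_(0 <= b < N) c <= \sum_(0 <= b < N) `|F b.+1 - em * F b|.
      apply: ler_sum => b _; rewrite dn; apply: ler_peMl; first exact: ltW.
      exact: exprn_ege1.
    have L2 : \sum_(0 <= b < N) `|F b.+1 - em * F b| <= \sum_(0 <= b < N) (F b.+1 + F b).
      by apply: ler_sum => b _; exact: dbound.
    rewrite big_split /= in L2.
    have L4 : \sum_(0 <= b < N) F b.+1 <= \sum_(0 <= b < N.+1) F b.
      by rewrite big_nat_recl // lerDr F_ge0.
    have L5 : \sum_(0 <= b < N) F b <= \sum_(0 <= b < N.+1) F b.
      by rewrite big_nat_recr //= lerDl F_ge0.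
    have L6 := F_partial N.+1; have L7 := G_le1.
    lra.
  have b0 : 0 <= 2 / c by rewrite divr_ge0 // ltW.
  have := archi_boundP b0; rewrite ltr_pdivrMr // => hN.
  by have := key (Num.bound (2 / c)); lra.
have Fs b : F b.+1 = em * F b by have := dpow b; rewrite d0 mulr0 => /eqP; rewrite subr_eq0 => /eqP.
elim: a => [|a IH]; first by rewrite expr0 mulr1.
by rewrite Fs IH exprS mulrCA.
Qed.

Lemma G_geom : sR (fun n => p n * W j z n) =
  F 0 / (1 - eta_minus (sigma r j + r j) (sigma r j) (r j) z).
Proof.
have hl1 : sigma r j + r j < 1 by rewrite -sig_split; apply: le_lt_trans (sig_le_rtot _) hrt.
have h0 := sig_ge0 j; have l0 := hr j.
have [_ _ _ em0 emh] := eta_facts h0 l0 hz1.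
have FG := F_geom.
move: (eta_minus _ _ _ z) em0 emh FG => em em0 emh FG.
have em1 : `|em| < 1 by rewrite ger0_norm //; lra.
apply: EFin_inj; rewrite G_ser.
transitivity (limn (EFin \o series (geometric (F 0) em))).
  apply/congr_lim/funext => N /=; rewrite /series /= -sumEFin.
  by apply: eq_bigr => a _; rewrite FG.
rewrite EFin_lim; last exact: (@is_cvg_geometric_series _ (F 0) _ em1).
congr EFin.
have /(@cvg_unique _ (@Rhausdorff R)) := @cvg_geometric_series _ (F 0) _ em1.
move/(_ _ (@is_cvg_geometric_series _ (F 0) _ em1)) => EE; by rewrite -EE.
Qed.

Lemma S_Wif (P : st -> bool) (b : nat) :
  S (fun n : st => if n j == b then (if P n then p n * W j z n else 0) else 0) =
  ((z ^+ b) * sR (fun n : st => if (P n) && (n j == b) then p n else 0))%:E.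
Proof.
rewrite EFinM -(finb hp0 hnorm (bnd_if hp0 _)) -S_scale; last 2 first.
- exact: exprn_ge0.
- by move=> n; case: ifP.
apply: S_ext => n; case: (eqVneq (n j) b) => [e|ne].
  by rewrite andbT /W e; case: ifP; rewrite ?mulr0 // mulrC.
by rewrite andbF mulr0.
Qed.

Lemma G_serQ : (sR (fun n => p n * W j z n))%:E = (\sum_(b <oo) (z ^+ b * Qb p j b)%:E)%E.
Proof.
rewrite -(finb hp0 hnorm bpW) (S_part (fun n : st => n j)); last by move=> n; case/andP: (bpW n).
apply/congr_lim/funext => N; apply: eq_bigr => b _.
rewrite -(S_Wif xpredT b) /Qb; apply: S_ext => n; by [].
Qed.

Lemma F0_ser : (F 0)%:E = (\sum_(b <oo) (z ^+ b * qb p j b)%:E)%E.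
Proof.
rewrite /F /Fa -(finb hp0 hnorm (bnd_ifW hp0 j hz0 hz1 _)) (S_part (fun n : st => n j)); last first.
  by move=> n; case/andP: (bnd_ifW hp0 j hz0 hz1 (fun n => Hn j n == 0%N) n).
apply/congr_lim/funext => N; apply: eq_bigr => b _.
by rewrite -(S_Wif (fun n => Hn j n == 0%N) b).
Qed.

Lemma lzG : r j * z * sR (fun n => p n * W j z n) = F 0 - qb p j 0.
Proof.
suff E : ((F 0)%:E = ((qb p j 0) + r j * z * sR (fun n => p n * W j z n))%:E)%E.
  have E' : F 0 = qb p j 0 + r j * z * sR (fun n => p n * W j z n) by case: E.
  rewrite E'; ring.
have q0 b : 0 <= qb p j b by apply: (sR_ge0 hp0 hnorm (bnd_if hp0 _)).
have Q0 b : 0 <= Qb p j b by apply: (sR_ge0 hp0 hnorm (bnd_if hp0 _)).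
rewrite F0_ser EFinD (EFinM (r j * z)) G_serQ.
rewrite (@nneseries_recl _ xpredT); last 2 first.
- by move=> k _; rewrite lee_fin mulr_ge0 // exprn_ge0.
- by [].
rewrite expr0 mul1r; congr (_ + _)%E.
rewrite -nneseriesZl; last by move=> k _; rewrite lee_fin mulr_ge0 // exprn_ge0.
rewrite -(@nneseries_addn _ (fun b => (z ^+ b * qb p j b)%:E) 1); last first.
  by move=> k; rewrite lee_fin mulr_ge0 // exprn_ge0.
apply: eq_eseriesr => b _.
rewrite addn1 -(stepB hr hp0 hbal hnorm j hz0 hz1 b) -EFinM exprS; congr EFin; ring.
Qed.

End Series.

Unset Implicit Arguments.
Set Strict Implicit.

Theorem mainTheorem5 (R : realType) (K : nat) (r : 'I_K -> R)
  (p : {ffun 'I_K -> nat} -> R)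
  (hK : (2 <= K)%N)
  (hr : forall k, 0 < r k)
  (hrt : rtot r < 1)
  (hp0 : forall n, 0 <= p n)
  (hbal : forall n, balance_eq r p n)
  (hnorm : (\esum_(n in [set: {ffun 'I_K -> nat}]) (p n)%:E = 1)%E)
  (j : 'I_K) (hj : (1 <= j)%N) (z : R) (hz0 : 0 <= z) (hz1 : z <= 1) :
  let sj := sigma r j.+1 in
  let sjm1 := sigma r j in
  let rj := r j in
  (\esum_(n in [set: {ffun 'I_K -> nat}]) (p n * z ^+ (n j))%:E
     = ((1 - sj) / (eta_plus sj sjm1 rj z - sj))%:E)%E
  /\ (1 - sj) / (eta_plus sj sjm1 rj z - sj)
     = (1 - sj) / rj * ((sj - eta_minus sj sjm1 rj z) / (1 - sj * z))
  /\ (1 - sj) / rj * ((sj - eta_minus sj sjm1 rj z) / (1 - sj * z))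
     = (1 - sj) / (1 - sj * z) * ((1 - z * eta_minus sj sjm1 rj z) / (1 - eta_minus sj sjm1 rj z)).
Proof.
move=> sj sjm1 rj; rewrite /sj /sjm1 /rj {sj sjm1 rj}.
have hl1 : sigma r j + r j < 1 by rewrite -sig_split; apply: le_lt_trans (sig_le_rtot hr _) hrt.
have h0 := sig_ge0 hr j; have l0 := hr j.
have o0 : (0:R) <= 1 by [].
have o1 : (1:R) <= 1 by [].
have G1 : sR (fun n => p n * W j 1 n) = 1.
  transitivity (sR p); last exact: sRp hnorm.
  apply: sR_ext => n; by rewrite /W expr1n mulr1.
have GG1 := G_geom hr hp0 hbal hnorm j o0 o1 hrt.
have LZ1 := lzG hr hp0 hbal hnorm j o0 o1.
rewrite G1 em_at1 // in GG1; last by lra.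
rewrite G1 in LZ1.
have q0 : qb p j 0 = 1 - (sigma r j + r j).
  have e1 : Fa p j 1 0 = 1 - sigma r j.
    have hne : 1 - sigma r j != 0 by rewrite subr_eq0; apply/eqP; lra.
    by move: GG1; move/(congr1 (fun x => x * (1 - sigma r j))); rewrite mul1r divfK.
  rewrite e1 in LZ1; lra.
have GG := G_geom hr hp0 hbal hnorm j hz0 hz1 hrt.
have LZ := lzG hr hp0 hbal hnorm j hz0 hz1.
rewrite q0 in LZ.
have [Esum Eprod ep1 em0 emh] := eta_facts h0 l0 hz1.
rewrite !sig_split.
have GE : (\esum_(n in [set: {ffun 'I_K -> nat}]) (p n * z ^+ (n j))%:E)%E = (sR (fun n => p n * W j z n))%:E.
  exact: (finb hp0 hnorm (bpW hp0 j hz0 hz1)).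
rewrite GE.
move: (sR (fun n => p n * W j z n)) GG LZ => G GG LZ.
move: (Fa p j z 0) GG LZ => F0 GG LZ.
move: (eta_plus _ _ _ z) (eta_minus _ _ _ z) Esum Eprod ep1 em0 emh GG => ep em Esum Eprod ep1 em0 emh GG.
move: (sigma r j) (r j) h0 l0 hl1 Esum Eprod emh GG LZ => h l h0 l0 hl1 Esum Eprod emh GG LZ.
have em1 : 1 - em != 0 by rewrite subr_eq0; apply/eqP; lra.
have ep1' : ep - (h + l) != 0 by rewrite subr_eq0; apply/eqP; lra.
have l1 : l != 0 by apply/eqP; lra.
have sz : 1 - (h + l) * z != 0.
  have : (h + l) * z <= h + l by rewrite ler_piMr //; lra.
  by move=> H; rewrite subr_eq0; apply/eqP; lra.
have semz : (h + l) - em != 0 by rewrite subr_eq0; apply/eqP; lra.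
have Gv : G = (1 - (h + l)) / (ep - (h + l)).
  have GF : F0 = G * (1 - em) by rewrite GG divfK.
  rewrite GF in LZ.
  have : G * (ep - (h + l)) = 1 - (h + l).
    have e : ep - (h + l) = 1 - em - l * z by lra.
    rewrite e; lra.
  by move=> <-; rewrite mulfK.
split.
  by rewrite Gv.
have key1 : (ep - (h + l)) * ((h + l) - em) = l * (1 - (h + l) * z).
  have := congr1 (fun x => (h + l) * x) Esum; simpl => E1; nra.
have key2 : ((h + l) - em) * (1 - em) = l * (1 - z * em).
  have := congr1 (fun x => em * x) Esum; simpl => E1; nra.
split.
  have -> : 1 - (h + l) * z = (ep - (h + l)) * ((h + l) - em) / l by rewrite key1 mulrAC divff // mul1r.
  by field; rewrite ep1' semz l1.
have -> : 1 - z * em = ((h + l) - em) * (1 - em) / l by rewrite key2 mulrAC divff // mul1r.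
by field; rewrite em1 sz l1.
Qed.
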